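(* Let $p$ be a prime and let $f:\mathbb{Z}_p\times\mathbb{Z}_p\to\mathbb{Z}_p$ be additively inseparable. Then for all $n,m\ge1$ and every function $F:\mathbb{Z}_p^n\times\mathbb{Z}_p^m\to\mathbb{Z}_p$ there is a protocol with the following properties. Alice, holding $\vec x\in\mathbb{Z}_p^n$, and Bob, holding $\vec y\in\mathbb{Z}_p^m$, share finitely many copies of $P^f$ and shared randomness, and do not communicate. On every input, Alice outputs $a$ and Bob outputs $b$ with $a-b=F(\vec x,\vec y)$ with probability $1$. Consequently, given access to copies of $P^f$, Bob can compute $F(\vec x,\vec y)$ with certainty after Alice sends him a single element of $\mathbb{Z}_p$. Thus the deterministic communication complexity of every such $F$ becomes trivial.
   Context: Let $p$ be a prime. All arithmetic on elements of $\mathbb{Z}_p$ is modulo $p$. A box is a conditional probability distribution $P(a,b\mid x,y)$ with $a,b,x,y\in\mathbb{Z}_p$. It is shared by Alice, who supplies $x$ and receives $a$, and Bob, who supplies $y$ and receives $b$. Different copies act independently. For $f:\mathbb{Z}_p\times\mathbb{Z}_p\to\mathbb{Z}_p$, the functional box is $P^f(a,b\mid x,y)=1/p$ if $a-b=f(x,y)$, and $0$ otherwise. A function $f$ is additively separable if $f(x,y)=g(x)+h(y)$ for some $g,h:\mathbb{Z}_p\to\mathbb{Z}_p$. Otherwise it is additively inseparable. In a protocol, each party's inputs to the box copies may depend on their own input, the shared randomness, and their own previously obtained box outputs. *)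

(* Defs.v *)
From HB Require Import structures.
From mathcomp Require Import all_boot all_order all_algebra.
Set Implicit Arguments. Unset Strict Implicit. Unset Printing Implicit Defensive.
Import GRing.Theory Num.Theory.
Local Open Scope ring_scope.

(* Z_p is 'F_p (used with the hypothesis [prime p]). *)

Definition additively_separable (p : nat) (f : 'F_p -> 'F_p -> 'F_p) : Prop :=
  exists (g h : 'F_p -> 'F_p), forall x y, f x y = g x + h y.

Definition Pbox (p : nat) (f : 'F_p -> 'F_p -> 'F_p) (a b x y : 'F_p) : rat :=
  if a - b == f x y then (p%:R)^-1 else 0.

(* A no-communication protocol using copies of a box, with shared randomness
   r : R.  The j-th box input of each party is a function of its own input,
   the shared randomness, and the list of its own previous box outputs
   (of length j).  Each final output is a function of its own input, the
   shared randomness and all of its own box outputs. *)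
Record protocol (p n m : nat) (R : Type) := Protocol {
  alice_in  : ('I_n -> 'F_p) -> R -> seq 'F_p -> 'F_p;
  bob_in    : ('I_m -> 'F_p) -> R -> seq 'F_p -> 'F_p;
  alice_out : ('I_n -> 'F_p) -> R -> seq 'F_p -> 'F_p;
  bob_out   : ('I_m -> 'F_p) -> R -> seq 'F_p -> 'F_p
}.

(* [as_] (Alice's box outputs) and [bs] (Bob's box outputs) form a possible
   transcript (positive probability) of running protocol P with k box copies
   of P^f, on inputs x, y and shared randomness r: copy j is fed the inputs
   chosen adaptively by each party and yields (a_j, b_j) in the support of
   P^f(. , . | x_j, y_j). *)
Definition possible_transcript (p n m : nat) (R : Type)
  (f : 'F_p -> 'F_p -> 'F_p) (P : protocol p n m R) (k : nat)
  (x : 'I_n -> 'F_p) (y : 'I_m -> 'F_p) (r : R) (as_ bs : seq 'F_p) : Prop :=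
  size as_ = k /\ size bs = k /\
  forall j, (j < k)%N ->
    0 < Pbox f (nth 0 as_ j) (nth 0 bs j)
               (alice_in P x r (take j as_)) (bob_in P y r (take j bs)).

(* Main.v *)
Require Import Defs.
From HB Require Import structures.
From mathcomp Require Import all_boot all_order all_algebra.
From Stdlib Require Import FunctionalExtensionality.
From mathcomp Require Import ring.
Import GRing.Theory Num.Theory.
Local Open Scope ring_scope.

Section Helpers.
Variables (p n m : nat) (f : 'F_p -> 'F_p -> 'F_p) (x1 y1 : 'F_p).
Variable (F : ('I_n -> 'F_p) -> ('I_m -> 'F_p) -> 'F_p).

Definition TT : finType := ({ffun 'I_n -> 'F_p} * {ffun 'I_m -> 'F_p})%type.
Definition dflt : TT := ([ffun=> 0], [ffun=> 0]).
Definition eT (j : nat) : TT := nth dflt (enum TT) j.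
Definition kk := size (enum TT).
Definition cc := f x1 y1 - f x1 0 - f 0 y1 + f 0 0.
Definition ww (j : nat) := F (eT j).1 (eT j).2 / cc.
Definition xin (x : 'I_n -> 'F_p) j := if [ffun i => x i] == (eT j).1 then x1 else 0.
Definition yin (y : 'I_m -> 'F_p) j := if [ffun i => y i] == (eT j).2 then y1 else 0.

Definition proto : protocol p n m unit := Protocol
  (fun x _ s => xin x (size s))
  (fun y _ s => yin y (size s))
  (fun x _ s => \sum_(j < kk) ww j * (nth 0 s j - f (xin x j) 0))
  (fun y _ s => \sum_(j < kk) ww j * (nth 0 s j + f 0 (yin y j) - f 0 0)).

Lemma proto_ok (hc : cc != 0) x y r as_ bs :
  possible_transcript f proto kk x y r as_ bs ->
  alice_out proto x r as_ - bob_out proto y r bs = F x y.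
Proof.
move=> [sa [sb H]] /=.
rewrite -sumrB.
pose G := fun e : TT => if e == ([ffun i => x i], [ffun i => y i]) then F e.1 e.2 else 0.
have -> : \sum_(i < kk) (ww i * (nth 0 as_ i - f (xin x i) 0) -
      ww i * (nth 0 bs i + f 0 (yin y i) - f 0 0)) =
  \sum_(i < kk) G (nth dflt (enum TT) i).
  apply: eq_bigr => j _; rewrite /G.
  have hj := H j (ltn_ord j).
  rewrite /Pbox /= !size_take sa sb ltn_ord in hj.
  have {}hj : nth 0 as_ j - nth 0 bs j = f (xin x j) (yin y j).
    by move: hj; case: eqP => // _; rewrite ltxx.
  rewrite -mulrBr.
  have -> : nth 0 as_ j - f (xin x j) 0 - (nth 0 bs j + f 0 (yin y j) - f 0 0)
     = f (xin x j) (yin y j) - f (xin x j) 0 - f 0 (yin y j) + f 0 0.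
    rewrite -hj; ring.
  rewrite /ww /xin /yin /eT -/(eT j).
  case: (eT j) => e1 e2 /=.
  rewrite xpair_eqE [e1 == _]eq_sym [e2 == _]eq_sym.
  case: eqP => _; case: eqP => _ /=.
  - by rewrite -/cc mulfVK.
  1-3: by rewrite (_ : _ - _ - _ + _ = 0) ?mulr0 //; ring.
have e1 := @big_nth _ 0 +%R _ dflt (enum TT) xpredT G.
rewrite big_mkord /= in e1.
rewrite /kk -e1 big_enum /= -big_mkcond big_pred1_eq /=.
congr F; apply: functional_extensionality => i; by rewrite ffunE.
Qed.

End Helpers.

Theorem theorem1 (p : nat) (hp : prime p) (f : 'F_p -> 'F_p -> 'F_p)
  (hf : ~ additively_separable f) (n m : nat) (hn : (1 <= n)%N) (hm : (1 <= m)%N)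
  (F : ('I_n -> 'F_p) -> ('I_m -> 'F_p) -> 'F_p) :
  exists (k : nat) (R : finType) (P : protocol p n m R),
    (0 < #|R|)%N /\
    forall (x : 'I_n -> 'F_p) (y : 'I_m -> 'F_p) (r : R) (as_ bs : seq 'F_p),
      possible_transcript f P k x y r as_ bs ->
      alice_out P x r as_ - bob_out P y r bs = F x y.
Proof.
have [/existsP [x1 /existsP [y1 hc]]|hno] :=
  boolP [exists x1, exists y1, f x1 y1 - f x1 0 - f 0 y1 + f 0 0 != 0].
  exists (@kk p n m), unit, (@proto p n m f x1 y1 F); split; first by rewrite card_unit.
  by move=> x y r as_ bs; apply: proto_ok.
exfalso; apply: hf; exists (fun x => f x 0), (fun y => f 0 y - f 0 0) => x y.
move/existsPn: hno => /(_ x) /existsPn /(_ y) /negPn /eqP h.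
have e : f x y - f x 0 - f 0 y + f 0 0 + (f x 0 + (f 0 y - f 0 0)) =
  f x 0 + (f 0 y - f 0 0) by rewrite h add0r.
rewrite -e; ring.
Qed.
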